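(* In the network revenue management problem described in the context, the Frequent Re-solving policy satisfies $v^{\mathrm{DLP}}-v^{\mathrm{FR}}=O(\sqrt{T})$: there exist constants $M$ and $T_1$ depending only on $\lambda_1,\dots,\lambda_n$, $r_1,\dots,r_n$ and $A$ (not on the capacities $C_1,\dots,C_m$) such that $v^{\mathrm{DLP}}-v^{\mathrm{FR}}\le M\sqrt{T}$ for all $T\ge T_1$.
   Context: NRM problem: horizon $[0,T]$, $T$ a positive integer; $n$ classes with independent Poisson arrivals $\Lambda_j(t)$ of rates $\lambda_j>0$; $m$ resources with initial capacities $C=(C_1,\dots,C_m)^\top$; accepting a class-$j$ customer earns $r_j\ge0$ and consumes $A_j=(a_{1j},\dots,a_{mj})^\top$, $a_{lj}\ge0$, $A=(a_{lj})$. Customers are irrevocably accepted or rejected upon arrival and can only be accepted if $A_j$ is componentwise at most the remaining capacity. Deterministic LP value: $v^{\mathrm{DLP}}=\max\{T\sum_jr_jx_j:\sum_jA_jx_j\le C/T,\ 0\le x_j\le\lambda_j\}$. Frequent Re-solving (FR) policy: for each $t=0,1,\dots,T-1$, with remaining capacity $C(t)$ and $b(t)=C(t)/(T-t)$, compute an optimal solution $x(t)$ of $\max\{\sum_jr_jx_j:\sum_jA_jx_j\le b(t),\ 0\le x_j\le\lambda_j\}$; during $[t,t+1)$ each arriving class-$j$ customer is accepted independently with probability $x_j(t)/\lambda_j$ if capacity suffices, and rejected otherwise. $v^{\mathrm{FR}}$ is its expected revenue. *)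

(* Defs.v *)
From Stdlib Require Import Reals Lra Lia.
From Coquelicot Require Import Coquelicot.
Open Scope R_scope.

(* Conventions: classes are indexed by j < n, resources by l < m.
   lam j = lambda_j, r j = r_j, a l j = a_{lj}; a vector in R^k is a
   function nat -> R of which only the first k coordinates matter. *)

Fixpoint fsum (n : nat) (f : nat -> R) : R :=
  match n with
  | O => 0
  | S k => fsum k f + f k
  end.

Definition lp_feas (n m : nat) (lam : nat -> R) (a : nat -> nat -> R)
  (b : nat -> R) (x : nat -> R) : Prop :=
  (forall j, (j < n)%nat -> 0 <= x j <= lam j) /\
  (forall l, (l < m)%nat -> fsum n (fun j => a l j * x j) <= b l).

Definition lp_opt (n m : nat) (lam r : nat -> R) (a : nat -> nat -> R)
  (b : nat -> R) (x : nat -> R) : Prop :=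
  lp_feas n m lam a b x /\
  forall y, lp_feas n m lam a b y ->
    fsum n (fun j => r j * y j) <= fsum n (fun j => r j * x j).

Fixpoint fitsb (m : nat) (a : nat -> nat -> R) (j : nat) (c : nat -> R) : bool :=
  match m with
  | O => true
  | S m' => fitsb m' a j c && (if Rle_dec (a m' j) (c m') then true else false)
  end.

Definition consume (a : nat -> nat -> R) (j : nat) (c : nat -> R) : nat -> R :=
  fun l => c l - a l j.

Definition poisson_pmf (mu : R) (k : nat) : R :=
  exp (- mu) * mu ^ k / INR (Factorial.fact k).

(* Within a unit period [t,t+1) the FR policy uses a fixed x.  The superposition
   of the class arrival processes is Poisson with rate Lam = sum_j lam_j, and
   each arrival is independently of class j with probability lam_j / Lam.
   period_rev k x cont c = expected revenue collected from the next k arrivals of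
   the period, starting with remaining capacity c, plus the expected value
   cont c' of the capacity c' left after them (continuation value). *)
Fixpoint period_rev (n m : nat) (lam r : nat -> R) (a : nat -> nat -> R)
  (k : nat) (x : nat -> R) (cont : (nat -> R) -> R) (c : nat -> R) : R :=
  match k with
  | O => cont c
  | S k' =>
      fsum n (fun j =>
        lam j / fsum n lam *
        (if fitsb m a j c then
           x j / lam j * (r j + period_rev n m lam r a k' x cont (consume a j c))
           + (1 - x j / lam j) * period_rev n m lam r a k' x cont c
         else period_rev n m lam r a k' x cont c))
  end.

(* FR_rem T sel s c = expected revenue of the FR policy over [T-s, T] when the
   remaining capacity at time T-s is c.  sel t c is the optimal LP solution x(t)
   chosen at time t when the remaining capacity is c. *)
Fixpoint FR_rem (n m : nat) (lam r : nat -> R) (a : nat -> nat -> R)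
  (T : nat) (sel : nat -> (nat -> R) -> (nat -> R)) (s : nat) (c : nat -> R)
  {struct s} : R :=
  match s with
  | O => 0
  | S s' =>
      Series (fun k =>
        poisson_pmf (fsum n lam) k *
        period_rev n m lam r a k (sel (T - S s')%nat c)
          (FR_rem n m lam r a T sel s') c)
  end.

Definition v_FR (n m : nat) (lam r : nat -> R) (a : nat -> nat -> R)
  (T : nat) (sel : nat -> (nat -> R) -> (nat -> R)) (C : nat -> R) : R :=
  FR_rem n m lam r a T sel T C.

Definition FR_selection (n m : nat) (lam r : nat -> R) (a : nat -> nat -> R)
  (T : nat) (sel : nat -> (nat -> R) -> (nat -> R)) : Prop :=
  forall (t : nat) (c : nat -> R), (t < T)%nat ->
    (forall l, (l < m)%nat -> 0 <= c l) ->
    lp_opt n m lam r a (fun l => c l / INR (T - t)) (sel t c).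

(* Main.v *)
Require Import Defs.
From Stdlib Require Import Reals Lra Lia Bool Classical_Prop.
From Coquelicot Require Import Coquelicot.
Open Scope R_scope.

Lemma fsum_ext n f g : (forall j, (j < n)%nat -> f j = g j) -> fsum n f = fsum n g.
Proof. induction n; simpl; intros H; auto. rewrite IHn by (intros; apply H; lia). rewrite H by lia. ring. Qed.

Lemma fsum_plus n f g : fsum n (fun j => f j + g j) = fsum n f + fsum n g.
Proof. induction n; simpl; [ring|]. rewrite IHn; ring. Qed.

Lemma fsum_minus n f g : fsum n (fun j => f j - g j) = fsum n f - fsum n g.
Proof. induction n; simpl; [ring|]. rewrite IHn; ring. Qed.

Lemma fsum_scal n c f : fsum n (fun j => c * f j) = c * fsum n f.
Proof. induction n; simpl; [ring|]. rewrite IHn; ring. Qed.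

Lemma fsum_const0 n : fsum n (fun _ => 0) = 0.
Proof. induction n; simpl; [ring|]. rewrite IHn; ring. Qed.

Lemma fsum_le n f g : (forall j, (j < n)%nat -> f j <= g j) -> fsum n f <= fsum n g.
Proof. induction n; simpl; intros H; [lra|]. assert (H1 := H n (Nat.lt_succ_diag_r n)).
  assert (fsum n f <= fsum n g) by (apply IHn; intros; apply H; lia). lra. Qed.

Lemma fsum_nonneg n f : (forall j, (j < n)%nat -> 0 <= f j) -> 0 <= fsum n f.
Proof. intros H. rewrite <- (fsum_const0 n). apply fsum_le; auto. Qed.

Lemma fsum_single n f j : (forall i, (i < n)%nat -> 0 <= f i) -> (j < n)%nat -> f j <= fsum n f.
Proof. induction n; simpl; intros H Hj; [lia|].
  destruct (Nat.eq_dec j n) as [->|Hne].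
  - assert (0 <= fsum n f) by (apply fsum_nonneg; intros; apply H; lia). lra.
  - assert (f j <= fsum n f) by (apply IHn; [intros; apply H; lia| lia]).
    assert (0 <= f n) by (apply H; lia). lra. Qed.

Lemma fsum_shift k f : fsum (S k) f = f O + fsum k (fun i => f (S i)).
Proof. induction k; simpl in *; [ring|]. rewrite IHk. ring. Qed.

Lemma fsum_comm n m (f : nat -> nat -> R) :
  fsum n (fun j => fsum m (fun l => f j l)) = fsum m (fun l => fsum n (fun j => f j l)).
Proof. induction n; simpl. rewrite fsum_const0; auto.
  rewrite IHn, <- fsum_plus. reflexivity. Qed.

Lemma fsum_nat k : fsum k (fun i => INR i) = INR k * (INR k - 1) / 2.
Proof. induction k; simpl fsum. simpl; field. rewrite IHk, S_INR. field. Qed.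

Lemma fitsb_true m a j c : fitsb m a j c = true -> forall l, (l < m)%nat -> a l j <= c l.
Proof. induction m; simpl; intros H l Hl; [lia|].
  apply andb_prop in H as [H1 H2].
  destruct (Nat.eq_dec l m) as [->|Hne].
  - destruct (Rle_dec (a m j) (c m)); auto; discriminate.
  - apply IHm; auto; lia. Qed.

Lemma fitsb_false m a j c : fitsb m a j c = false -> exists l, (l < m)%nat /\ c l < a l j.
Proof. induction m; simpl; intros H; [discriminate|].
  apply andb_false_iff in H as [H|H].
  - destruct (IHm H) as [l [Hl Hc]]. exists l; split; auto; lia.
  - exists m; split; [lia|]. destruct (Rle_dec (a m j) (c m)); [discriminate| lra]. Qed.

Lemma is_series_le_R (u v : nat -> R) lu lv :
  is_series u lu -> is_series v lv -> (forall k, u k <= v k) -> lu <= lv.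
Proof. intros Hu Hv H.
  assert (Hl := is_lim_seq_le (sum_n u) (sum_n v) lu lv).
  simpl in Hl. apply Hl; auto.
  intros k. induction k. rewrite !sum_O. auto.
  rewrite !sum_Sn. unfold plus; simpl. specialize (H (S k)). lra. Qed.

Lemma pmf_series mu : is_series (poisson_pmf mu) 1.
Proof.
  assert (H : is_series (fun k => / INR (Factorial.fact k) * mu ^ k) (exp mu)).
  { apply is_series_Reals. unfold exp. destruct (exist_exp mu) as [l Hl]. simpl. exact Hl. }
  apply (is_series_scal (exp (- mu))) in H.
  replace 1 with (scal (exp (-mu)) (exp mu)).
  eapply is_series_ext; [|exact H]. intros k. unfold poisson_pmf, scal; simpl.
  unfold mult; simpl. field. apply INR_fact_neq_0.
  unfold scal; simpl; unfold mult; simpl. rewrite <- exp_plus. replace (-mu+mu) with 0 by ring. apply exp_0.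
Qed.

Lemma pmf_S mu k : poisson_pmf mu (S k) * INR (S k) = mu * poisson_pmf mu k.
Proof. unfold poisson_pmf. rewrite (fact_simpl k), mult_INR. simpl pow.
  field. split. apply INR_fact_neq_0. rewrite S_INR. pose proof (pos_INR k). lra. Qed.

Lemma pmf_series1 mu : is_series (fun k => poisson_pmf mu k * INR k) mu.
Proof. apply is_series_decr_1.
  match goal with |- is_series _ ?l => replace l with (scal mu 1) by (unfold plus, opp, scal; simpl; unfold mult; simpl; ring) end.
  eapply is_series_ext; [| apply (is_series_scal mu _ _ (pmf_series mu))].
  intros k. rewrite pmf_S. reflexivity. Qed.

Lemma pmf_series2 mu : is_series (fun k => poisson_pmf mu k * (INR k * (INR k - 1))) (mu * mu).
Proof. apply is_series_decr_1.
  match goal with |- is_series _ ?l => replace l with (scal mu mu) by (unfold plus, opp, scal; simpl; unfold mult; simpl; ring) end.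
  eapply is_series_ext; [| apply (is_series_scal mu _ _ (pmf_series1 mu))].
  intros k. replace (INR (S k) - 1) with (INR k) by (rewrite S_INR; ring).
  rewrite <- (Rmult_assoc (poisson_pmf mu (S k))), pmf_S. unfold scal; simpl; unfold mult; simpl. ring. Qed.

Lemma pmf_poly mu c0 c1 c2 :
  is_series (fun k => poisson_pmf mu k * (c0 + c1 * INR k + c2 * (INR k * (INR k - 1))))
    (c0 + c1 * mu + c2 * (mu * mu)).
Proof.
  pose proof (is_series_scal c0 _ _ (pmf_series mu)) as H0.
  pose proof (is_series_scal c1 _ _ (pmf_series1 mu)) as H1.
  pose proof (is_series_scal c2 _ _ (pmf_series2 mu)) as H2.
  pose proof (is_series_plus _ _ _ _ (is_series_plus _ _ _ _ H0 H1) H2) as H.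
  unfold plus, scal in H; simpl in H; unfold mult in H; simpl in H.
  replace (c0 + c1 * mu + c2 * (mu * mu)) with (c0 * 1 + c1 * mu + c2 * (mu * mu)) by ring.
  eapply is_series_ext; [|exact H]. intros k. simpl. ring. Qed.

Lemma tangent Q q0 : 0 <= Q -> 0 < q0 -> sqrt Q <= sqrt q0 + (Q - q0) / (2 * sqrt q0).
Proof. intros HQ Hq.
  pose proof (sqrt_lt_R0 q0 Hq). pose proof (sqrt_sqrt Q HQ). pose proof (sqrt_sqrt q0 (Rlt_le _ _ Hq)).
  pose proof (sqrt_pos Q).
  apply Rmult_le_reg_l with (2 * sqrt q0). lra.
  replace (2 * sqrt q0 * (sqrt q0 + (Q - q0) / (2 * sqrt q0))) with (2 * (sqrt q0 * sqrt q0) + Q - q0) by (field; lra).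
  pose proof (pow2_ge_0 (sqrt q0 - sqrt Q)). nra. Qed.
Section Period.
Variables (n m : nat) (lam r : nat -> R) (a : nat -> nat -> R) (x : nat -> R).

Definition Sop (f : (nat -> R) -> R) (c : nat -> R) : R :=
  fsum n (fun j => lam j / fsum n lam *
    (if fitsb m a j c then x j / lam j * f (consume a j c) + (1 - x j / lam j) * f c else f c)).

Definition rho (c : nat -> R) : R :=
  fsum n (fun j => lam j / fsum n lam * (if fitsb m a j c then x j / lam j * r j else 0)).

Fixpoint Sit (i : nat) (f : (nat -> R) -> R) (c : nat -> R) : R :=
  match i with O => f c | S i' => Sop (Sit i' f) c end.

Definition Wsum := fsum n (fun j => lam j / fsum n lam).

Lemma pr_step k cont c :
  period_rev n m lam r a (S k) x cont c = rho c + Sop (period_rev n m lam r a k x cont) c.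
Proof. simpl. unfold rho, Sop. rewrite <- fsum_plus. apply fsum_ext. intros j _.
  destruct (fitsb m a j c); ring. Qed.

Lemma Sop_ext F G c : (forall c, F c = G c) -> Sop F c = Sop G c.
Proof. intros H. unfold Sop. apply fsum_ext. intros j _. rewrite !H. reflexivity. Qed.

Lemma Sop_plus F G c : Sop (fun c => F c + G c) c = Sop F c + Sop G c.
Proof. unfold Sop. rewrite <- fsum_plus. apply fsum_ext. intros j _.
  destruct (fitsb m a j c); ring. Qed.

Lemma Sop_scal al F c : Sop (fun c => al * F c) c = al * Sop F c.
Proof. unfold Sop. rewrite <- fsum_scal. apply fsum_ext. intros j _.
  destruct (fitsb m a j c); ring. Qed.

Lemma Sop_const be c : Sop (fun _ => be) c = be * Wsum.
Proof. unfold Sop, Wsum. rewrite <- fsum_scal. apply fsum_ext. intros j _.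
  destruct (fitsb m a j c); ring. Qed.

Lemma Sop_fsum N (F : nat -> (nat -> R) -> R) c :
  Sop (fun c => fsum N (fun q => F q c)) c = fsum N (fun q => Sop (F q) c).
Proof. induction N; simpl.
  - rewrite Sop_const. ring.
  - rewrite Sop_plus, IHN. reflexivity. Qed.

Lemma Sit_ext i F G c : (forall c, F c = G c) -> Sit i F c = Sit i G c.
Proof. revert c. induction i; simpl; intros c H; auto. apply Sop_ext. intros; auto. Qed.

Lemma Sit_plus i F G c : Sit i (fun c => F c + G c) c = Sit i F c + Sit i G c.
Proof. revert c. induction i; simpl; intros c; auto.
  rewrite <- Sop_plus. apply Sop_ext. intros; auto. Qed.

Lemma Sit_scal i al F c : Sit i (fun c => al * F c) c = al * Sit i F c.
Proof. revert c. induction i; simpl; intros c; auto.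
  rewrite <- Sop_scal. apply Sop_ext. intros; auto. Qed.

Lemma Sit_fsum i N (F : nat -> (nat -> R) -> R) c :
  Sit i (fun c => fsum N (fun q => F q c)) c = fsum N (fun q => Sit i (F q) c).
Proof. revert c. induction i; simpl; intros c; auto.
  rewrite <- Sop_fsum. apply Sop_ext. intros; auto. Qed.

Lemma Sit_const i be c : Wsum = 1 -> Sit i (fun _ => be) c = be.
Proof. intros HW. revert c. induction i; simpl; intros c; auto.
  rewrite (Sop_ext _ (fun _ => be)) by auto. rewrite Sop_const, HW. ring. Qed.

Lemma pr_decomp k cont c :
  period_rev n m lam r a k x cont c = fsum k (fun i => Sit i rho c) + Sit k cont c.
Proof. revert c. induction k; intros c. simpl. ring.
  rewrite pr_step. rewrite (Sop_ext _ (fun c => fsum k (fun i => Sit i rho c) + Sit k cont c)) by auto.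
  rewrite Sop_plus, Sop_fsum, fsum_shift. simpl Sit. rewrite Rplus_assoc. reflexivity. Qed.

Hypothesis Hlam : forall j, (j < n)%nat -> 0 < lam j.
Hypothesis Hx : forall j, (j < n)%nat -> 0 <= x j <= lam j.
Hypothesis Ha : forall l j, (l < m)%nat -> (j < n)%nat -> 0 <= a l j.

Lemma Lam_ge j : (j < n)%nat -> lam j <= fsum n lam.
Proof. intros Hj. apply fsum_single; auto. intros; apply Rlt_le; auto. Qed.

Lemma w_nonneg j : (j < n)%nat -> 0 <= lam j / fsum n lam.
Proof. intros Hj. assert (0 < lam j) by auto. assert (lam j <= fsum n lam) by (apply Lam_ge; auto).
  apply Rle_mult_inv_pos; lra. Qed.

Lemma p_bounds j : (j < n)%nat -> 0 <= x j / lam j <= 1.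
Proof. intros Hj. assert (0 < lam j) by auto. destruct (Hx j Hj). split.
  apply Rle_mult_inv_pos; lra. apply Rmult_le_reg_r with (lam j); auto. field_simplify; lra. Qed.

Lemma Wsum_le : 0 <= Wsum <= 1.
Proof. unfold Wsum. split. apply fsum_nonneg. intros; apply w_nonneg; auto.
  destruct (Nat.eq_dec n 0) as [En|En]. rewrite En. simpl. lra.
  assert (0 < fsum n lam). { apply Rlt_le_trans with (lam O). apply Hlam; lia. apply Lam_ge; lia. }
  replace (fsum n (fun j => lam j / fsum n lam)) with (fsum n (fun j => / fsum n lam * lam j))
    by (apply fsum_ext; intros; unfold Rdiv; ring).
  rewrite fsum_scal. right. field. lra. Qed.

Lemma Wsum_1 : (0 < n)%nat -> Wsum = 1.
Proof. intros Hn. unfold Wsum.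
  assert (0 < fsum n lam). { apply Rlt_le_trans with (lam O). apply Hlam; lia. apply Lam_ge; lia. }
  replace (fsum n (fun j => lam j / fsum n lam)) with (fsum n (fun j => / fsum n lam * lam j))
    by (apply fsum_ext; intros; unfold Rdiv; ring).
  rewrite fsum_scal. field. lra. Qed.

Definition nonneg (c : nat -> R) := forall l, (l < m)%nat -> 0 <= c l.

Definition Acol l := fsum n (fun j => a l j).

Definition reach (i : nat) (c c' : nat -> R) :=
  forall l, (l < m)%nat -> 0 <= c' l /\ c' l <= c l /\ c l - c' l <= INR i * Acol l.

Lemma fits_nonneg j c : (j < n)%nat -> fitsb m a j c = true -> nonneg (consume a j c).
Proof. intros Hj Hf l Hl. unfold consume. pose proof (fitsb_true _ _ _ _ Hf l Hl). lra. Qed.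

Lemma Sop_mono F G c :
  F c <= G c -> (forall j, (j < n)%nat -> fitsb m a j c = true -> F (consume a j c) <= G (consume a j c)) ->
  Sop F c <= Sop G c.
Proof. intros H1 H2. unfold Sop. apply fsum_le. intros j Hj.
  apply Rmult_le_compat_l. apply w_nonneg; auto.
  destruct (p_bounds j Hj). destruct (fitsb m a j c) eqn:Ef; auto.
  specialize (H2 j Hj Ef).
  apply Rplus_le_compat; apply Rmult_le_compat_l; lra. Qed.

Lemma reach_refl c : nonneg c -> reach 0 c c.
Proof. intros Hc l Hl. simpl. repeat split; auto; lra. Qed.

Lemma Acol_ge l j : (l < m)%nat -> (j < n)%nat -> a l j <= Acol l.
Proof. intros Hl Hj. apply fsum_single; auto. Qed.

Lemma reach_S i c c' : reach i c c' -> reach (S i) c c'.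
Proof. intros H l Hl. destruct (H l Hl) as [? [? ?]]. rewrite S_INR.
  assert (0 <= Acol l) by (apply fsum_nonneg; intros; apply Ha; auto). repeat split; auto; lra. Qed.

Lemma reach_cons i j c c' : (j < n)%nat -> reach i (consume a j c) c' -> reach (S i) c c'.
Proof. intros Hj H l Hl. destruct (H l Hl) as [? [? ?]]. unfold consume in *. rewrite S_INR.
  assert (0 <= a l j) by auto. assert (a l j <= Acol l) by (apply Acol_ge; auto).
  repeat split; auto; lra. Qed.

Lemma Sit_mono i f g c : nonneg c -> (forall c', reach i c c' -> f c' <= g c') -> Sit i f c <= Sit i g c.
Proof. revert c. induction i; simpl; intros c Hc H.
  - apply H, reach_refl; auto.
  - apply Sop_mono.
    + apply IHi; auto. intros; apply H, reach_S; auto.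
    + intros j Hj Hf. apply IHi. apply fits_nonneg; auto.
      intros c' Hr. apply H. eapply reach_cons; eauto. Qed.

Lemma Sop_mono_all F G c : (forall c, F c <= G c) -> Sop F c <= Sop G c.
Proof. intros H. apply Sop_mono; auto. Qed.

Hypothesis Hr : forall j, (j < n)%nat -> 0 <= r j.

Lemma Sit_mono_all i f g c : (forall c, f c <= g c) -> Sit i f c <= Sit i g c.
Proof. revert c. induction i; simpl; intros c H; auto.
  apply Sop_mono; auto. Qed.

Lemma Sit_const_le i B c : 0 <= B -> Sit i (fun _ => B) c <= B.
Proof. intros HB. revert c. induction i; simpl; intros c. lra.
  eapply Rle_trans. apply Sop_mono_all; auto. intros; apply IHi.
  rewrite Sop_const. pose proof Wsum_le. unfold Wsum in *. nra. Qed.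

Lemma Sit_zero i c : Sit i (fun _ => 0) c = 0.
Proof. revert c. induction i; simpl; intros c; auto.
  rewrite (Sop_ext _ (fun _ => 0)) by auto. rewrite Sop_const. ring. Qed.

Lemma Sit_nonneg i f c : (forall c, 0 <= f c) -> 0 <= Sit i f c.
Proof. intros H. rewrite <- (Sit_zero i c). apply Sit_mono_all. auto. Qed.

Lemma rho_bounds c : 0 <= rho c <= fsum n r.
Proof. unfold rho. split.
  - apply fsum_nonneg. intros j Hj. apply Rmult_le_pos. apply w_nonneg; auto.
    destruct (p_bounds j Hj). destruct fitsb; [apply Rmult_le_pos; auto| lra].
  - apply fsum_le. intros j Hj. pose proof (w_nonneg j Hj).
    destruct (p_bounds j Hj).
    assert (lam j / fsum n lam <= 1).
    { assert (0 < lam j) by auto. assert (lam j <= fsum n lam) by (apply Lam_ge; auto).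
      apply Rmult_le_reg_r with (fsum n lam). lra. field_simplify; lra. }
    assert (0 <= r j) by auto.
    destruct fitsb.
    + assert (x j / lam j * r j <= r j) by nra. nra.
    + lra. Qed.

Lemma pr_bounds k cont c B :
  nonneg c -> 0 <= B -> (forall c', nonneg c' -> 0 <= cont c' <= B) ->
  0 <= period_rev n m lam r a k x cont c <= INR k * fsum n r + B.
Proof. intros Hc HB Hcont. rewrite pr_decomp. split.
  - apply Rplus_le_le_0_compat.
    + apply fsum_nonneg. intros. apply Sit_nonneg. intros; apply rho_bounds.
    + rewrite <- (Sit_zero k c). apply Sit_mono; auto. intros c' Hr'. apply Hcont.
      intros l Hl; apply (Hr' l Hl).
  - apply Rplus_le_compat.
    + replace (INR k * fsum n r) with (fsum k (fun _ => fsum n r)).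
      apply fsum_le. intros i _. eapply Rle_trans. apply Sit_mono_all. intros; apply rho_bounds.
      apply Sit_const_le. pose proof (rho_bounds c); lra.
      clear. induction k. simpl; ring. simpl fsum. rewrite IHk, S_INR. ring.
    + eapply Rle_trans. apply Sit_mono; eauto. intros c' Hr'. apply Hcont.
      intros l Hl; apply (Hr' l Hl). apply Sit_const_le; auto. Qed.

Hypothesis Hn : (0 < n)%nat.

Lemma Lam_pos : 0 < fsum n lam.
Proof. apply Rlt_le_trans with (lam O). apply Hlam; lia. apply Lam_ge; auto; lia. Qed.

Lemma wp j : (j < n)%nat -> lam j / fsum n lam * (x j / lam j) = x j / fsum n lam.
Proof. intros Hj. assert (0 < lam j) by auto. pose proof Lam_pos. field. lra. Qed.

Lemma Sop_lin (L : (nat -> R) -> R) (d : nat -> R) al c :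
  (forall j c, (j < n)%nat -> L (consume a j c) = L c - d j) ->
  (forall j, (j < n)%nat -> 0 <= d j) ->
  al + L c - fsum n (fun j => x j / fsum n lam * d j) <= Sop (fun c => al + L c) c.
Proof. intros HL Hd.
  apply Rle_trans with ((al + L c) * Wsum - fsum n (fun j => x j / fsum n lam * d j)).
  rewrite Wsum_1; auto; lra. unfold Sop.
  unfold Wsum. rewrite <- fsum_scal, <- fsum_minus. apply fsum_le. intros j Hj.
  pose proof (wp j Hj). pose proof Lam_pos. assert (0 <= x j / fsum n lam * d j).
  { apply Rmult_le_pos; [apply Rle_mult_inv_pos; [apply Hx; auto| lra]| auto]. }
  destruct fitsb. rewrite HL by auto.
  transitivity (lam j / fsum n lam * (al + L c) - (lam j / fsum n lam * (x j / lam j)) * d j).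
  rewrite H. lra. right; ring. lra. Qed.

Lemma Sit_lin (L : (nat -> R) -> R) (d : nat -> R) :
  (forall j c, (j < n)%nat -> L (consume a j c) = L c - d j) ->
  (forall j, (j < n)%nat -> 0 <= d j) ->
  forall i al c, al + L c - INR i * fsum n (fun j => x j / fsum n lam * d j) <= Sit i (fun c => al + L c) c.
Proof. intros HL Hd. induction i; intros al c. simpl. lra.
  simpl Sit. set (D := fsum n (fun j => x j / fsum n lam * d j)).
  eapply Rle_trans; [| apply Sop_mono_all; intros c'; apply (IHi al c')].
  rewrite (Sop_ext _ (fun c => (al - INR i * D) + L c)) by (intros; fold D; ring).
  eapply Rle_trans; [| apply Sop_lin; eauto]. fold D. rewrite S_INR. lra.
Qed.
Definition Ax l := fsum n (fun j => a l j * x j).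

Lemma Ax_nonneg l : (l < m)%nat -> 0 <= Ax l.
Proof. intros Hl. apply fsum_nonneg. intros j Hj. apply Rmult_le_pos; [apply Ha; auto| apply Hx; auto]. Qed.

Variables (c0 : nat -> R) (SS : R).
Hypothesis Hc0 : nonneg c0.
Hypothesis HS : 1 <= SS.
Hypothesis HAx : forall l, (l < m)%nat -> Ax l <= c0 l / SS.

Fixpoint goodb (m' : nat) (j : nat) : bool :=
  match m' with
  | O => true
  | S m'' => goodb m'' j && (if Rlt_dec 0 (a m'' j) then
                               (if Rle_dec (2 * a m'' j) (c0 m'') then true else false) else true)
  end.

Lemma goodb_true j : forall mm, goodb mm j = true -> forall l, (l < mm)%nat -> 0 < a l j -> 2 * a l j <= c0 l.
Proof. intros mm. induction mm as [|m' IH]; simpl; intros H l Hl Hal; [lia|].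
  apply andb_prop in H as [H1 H2].
  destruct (Nat.eq_dec l m') as [->|Hne].
  - destruct (Rlt_dec 0 (a m' j)); [|lra]. destruct (Rle_dec (2 * a m' j) (c0 m')); auto; discriminate.
  - apply IH; auto; lia. Qed.

Lemma goodb_false j : forall mm, goodb mm j = false -> exists l, (l < mm)%nat /\ 0 < a l j /\ c0 l < 2 * a l j.
Proof. intros mm. induction mm as [|m' IH]; simpl; intros H; [discriminate|].
  apply andb_false_iff in H as [H|H].
  - destruct (IH H) as [l [Hl Hc]]. exists l; split; auto; lia.
  - exists m'; split; [lia|]. destruct (Rlt_dec 0 (a m' j)); [|discriminate].
    destruct (Rle_dec (2 * a m' j) (c0 m')); [discriminate| lra]. Qed.

Definition kap j l := if Rlt_dec 0 (a l j) then / (c0 l - a l j) else 0.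
Definition gg j := if goodb m j then x j * r j / fsum n lam else 0.
Definition be l := fsum n (fun j => gg j * kap j l).
Definition al0 := fsum n gg - fsum m (fun l => be l * c0 l).
Definition phi (c : nat -> R) := al0 + fsum m (fun l => be l * c l).

Lemma kap_nonneg j l : (l < m)%nat -> goodb m j = true -> 0 <= kap j l.
Proof. intros Hl Hg. unfold kap. destruct (Rlt_dec 0 (a l j)); [|lra].
  pose proof (goodb_true j m Hg l Hl r0). apply Rlt_le, Rinv_0_lt_compat. lra. Qed.

Lemma gg_nonneg j : (j < n)%nat -> 0 <= gg j.
Proof. intros Hj. unfold gg. destruct goodb; [|lra]. pose proof Lam_pos.
  apply Rle_mult_inv_pos; auto. apply Rmult_le_pos; [apply Hx|apply Hr]; auto. Qed.

Lemma gk_nonneg j l : (j < n)%nat -> (l < m)%nat -> 0 <= gg j * kap j l.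
Proof. intros Hj Hl. unfold gg. destruct (goodb m j) eqn:E; [|lra].
  apply Rmult_le_pos. pose proof Lam_pos.
  apply Rle_mult_inv_pos; auto. apply Rmult_le_pos; [apply Hx|apply Hr]; auto.
  apply kap_nonneg; auto. Qed.

Lemma be_nonneg l : (l < m)%nat -> 0 <= be l.
Proof. intros Hl. apply fsum_nonneg. intros; apply gk_nonneg; auto. Qed.

Lemma phi_alt c : phi c = fsum n (fun j => gg j * (1 - fsum m (fun l => kap j l * (c0 l - c l)))).
Proof. unfold phi, al0, be.
  rewrite (fsum_ext n (fun j => gg j * (1 - fsum m (fun l => kap j l * (c0 l - c l)))) (fun j => gg j - fsum m (fun l => gg j * kap j l * (c0 l - c l)))).
  2: { intros j _. rewrite Rmult_minus_distr_l, Rmult_1_r, <- fsum_scal. f_equal. apply fsum_ext. intros; ring. }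
  rewrite fsum_minus, fsum_comm.
  rewrite (fsum_ext m (fun l => fsum n (fun j => gg j * kap j l * (c0 l - c l)))
     (fun l => fsum n (fun j => gg j * kap j l) * c0 l - fsum n (fun j => gg j * kap j l) * c l)).
  2: { intros l _. rewrite <- !(Rmult_comm (c0 l)), <- !(Rmult_comm (c l)), <- !fsum_scal, <- fsum_minus.
       apply fsum_ext; intros; ring. }
  rewrite fsum_minus. ring. Qed.

Lemma rho_phi c : (forall l, (l < m)%nat -> 0 <= c l <= c0 l) -> phi c <= rho c.
Proof. intros Hc. rewrite phi_alt. unfold rho. apply fsum_le. intros j Hj.
  assert (E : lam j / fsum n lam * (if fitsb m a j c then x j / lam j * r j else 0)
             = if fitsb m a j c then x j * r j / fsum n lam else 0).
  { pose proof (wp j Hj). destruct fitsb; [|ring].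
    transitivity (lam j / fsum n lam * (x j / lam j) * r j); [ring|]. rewrite H. unfold Rdiv; ring. }
  rewrite E. clear E.
  assert (Hxr : 0 <= x j * r j / fsum n lam).
  { pose proof Lam_pos. apply Rle_mult_inv_pos; auto. apply Rmult_le_pos; [apply Hx|apply Hr]; auto. }
  unfold gg. destruct (goodb m j) eqn:Eg.
  2: { destruct fitsb; lra. }
  assert (Hs : 0 <= fsum m (fun l => kap j l * (c0 l - c l))).
  { apply fsum_nonneg. intros l Hl. apply Rmult_le_pos. apply kap_nonneg; auto. destruct (Hc l Hl); lra. }
  destruct (fitsb m a j c) eqn:Ef.
  - nra.
  - destruct (fitsb_false _ _ _ _ Ef) as [l [Hl Hcl]].
    destruct (Hc l Hl) as [Hc1 Hc2].
    assert (Hal : 0 < a l j) by lra.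
    pose proof (goodb_true j m Eg l Hl Hal).
    assert (1 <= kap j l * (c0 l - c l)).
    { unfold kap. destruct (Rlt_dec 0 (a l j)); [|lra].
      apply Rmult_le_reg_l with (c0 l - a l j). lra. field_simplify; lra. }
    assert (kap j l * (c0 l - c l) <= fsum m (fun l => kap j l * (c0 l - c l))).
    { apply (fsum_single m (fun l => kap j l * (c0 l - c l))); auto.
      intros i Hi. apply Rmult_le_pos. apply kap_nonneg; auto. destruct (Hc i Hi); lra. }
    nra. Qed.

Definition Dd := fsum n (fun j => x j / fsum n lam * fsum m (fun l => be l * a l j)).

Lemma Sit_phi i : phi c0 - INR i * Dd <= Sit i phi c0.
Proof. unfold phi, Dd.
  apply (Sit_lin (fun c => fsum m (fun l => be l * c l)) (fun j => fsum m (fun l => be l * a l j))).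
  - intros j c Hj. unfold consume. rewrite <- fsum_minus. apply fsum_ext. intros; ring.
  - intros j Hj. apply fsum_nonneg. intros l Hl. apply Rmult_le_pos. apply be_nonneg; auto. apply Ha; auto. Qed.

Lemma rev_lb k : INR k * fsum n gg - INR k * (INR k - 1) / 2 * Dd <= fsum k (fun i => Sit i rho c0).
Proof.
  apply Rle_trans with (fsum k (fun i => phi c0 - INR i * Dd)).
  - rewrite fsum_minus. rewrite (fsum_ext k (fun i => INR i * Dd) (fun i => Dd * INR i)) by (intros; ring).
    rewrite fsum_scal, fsum_nat.
    replace (fsum k (fun _ => phi c0)) with (INR k * fsum n gg). right; field.
    unfold phi, al0. clear. induction k. simpl; ring. simpl fsum. rewrite <- IHk, S_INR. ring.
  - apply fsum_le. intros i _. eapply Rle_trans. apply Sit_phi.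
    apply Sit_mono; auto. intros c' Hr'. apply rho_phi. intros l Hl. destruct (Hr' l Hl) as [? [? ?]]. lra. Qed.

Definition gam := fsum n (fun j => (2 + INR m * lam j) * r j).

Lemma kapAx j l : (j < n)%nat -> (l < m)%nat -> goodb m j = true -> kap j l * Ax l <= 2 / SS.
Proof. intros Hj Hl Hg. unfold kap. pose proof (Ax_nonneg l Hl).
  destruct (Rlt_dec 0 (a l j)) as [Hal|]. 2: { rewrite Rmult_0_l. apply Rle_mult_inv_pos; lra. }
  pose proof (goodb_true j m Hg l Hl Hal). pose proof (HAx l Hl).
  assert (Ax l <= c0 l / SS) by auto.
  apply Rmult_le_reg_l with (c0 l - a l j). lra. field_simplify; try lra.
  apply Rmult_le_reg_l with SS. lra.
  assert (SS * Ax l <= c0 l). { apply Rmult_le_reg_l with (/ SS). apply Rinv_0_lt_compat; lra.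
     rewrite <- Rmult_assoc, Rinv_l, Rmult_1_l by lra. unfold Rdiv in *; lra. }
  field_simplify; lra. Qed.

Lemma Dd_alt : fsum n lam * fsum n lam / 2 * Dd =
  fsum n lam / 2 * fsum n (fun j => gg j * fsum m (fun l => kap j l * Ax l)).
Proof. pose proof Lam_pos.
  assert (E1 : Dd = / fsum n lam * fsum m (fun l => be l * Ax l)).
  { unfold Dd.
    rewrite (fsum_ext n (fun j => x j / fsum n lam * fsum m (fun l => be l * a l j))
               (fun j => / fsum n lam * fsum m (fun l => x j * be l * a l j))).
    2: { intros j _. rewrite <- !fsum_scal. apply fsum_ext; intros; unfold Rdiv; ring. }
    rewrite fsum_scal, fsum_comm. f_equal. apply fsum_ext. intros l _. unfold Ax.
    rewrite <- fsum_scal. apply fsum_ext; intros; ring. }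
  assert (E2 : fsum m (fun l => be l * Ax l) = fsum n (fun j => gg j * fsum m (fun l => kap j l * Ax l))).
  { rewrite (fsum_ext m (fun l => be l * Ax l) (fun l => fsum n (fun j => gg j * kap j l * Ax l))).
    2: { intros l _. unfold be. rewrite (Rmult_comm _ (Ax l)), <- fsum_scal. apply fsum_ext; intros; ring. }
    rewrite <- fsum_comm. apply fsum_ext. intros j _. rewrite <- fsum_scal. apply fsum_ext; intros; ring. }
  rewrite E1, E2. field. lra. Qed.

Lemma rev_final : fsum n (fun j => r j * x j) - gam / SS <=
  fsum n lam * fsum n gg - fsum n lam * fsum n lam / 2 * Dd.
Proof. pose proof Lam_pos. rewrite Dd_alt.
  assert (EL: fsum n (fun j => r j * x j - (2 + INR m * lam j) * r j / SS) = fsum n (fun j => r j * x j) - gam / SS).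
  { rewrite fsum_minus. unfold gam. f_equal.
    rewrite (fsum_ext n (fun j => (2 + INR m * lam j) * r j / SS) (fun j => / SS * ((2 + INR m * lam j) * r j))) by (intros; unfold Rdiv; ring).
    rewrite fsum_scal. unfold Rdiv; ring. }
  assert (ER: fsum n (fun j => fsum n lam * gg j - fsum n lam / 2 * (gg j * fsum m (fun l => kap j l * Ax l)))
     = fsum n lam * fsum n gg - fsum n lam / 2 * fsum n (fun j => gg j * fsum m (fun l => kap j l * Ax l))).
  { rewrite fsum_minus, !fsum_scal. reflexivity. }
  rewrite <- EL, <- ER.
  apply fsum_le. intros j Hj.
  assert (0 <= r j) by auto. destruct (Hx j Hj) as [Hx1 Hx2]. assert (0 < lam j) by auto.
  unfold gg. destruct (goodb m j) eqn:Eg.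
  - assert (fsum m (fun l => kap j l * Ax l) <= INR m * (2 / SS)).
    { replace (INR m * (2 / SS)) with (fsum m (fun _ => 2 / SS)).
      apply fsum_le. intros l Hl. apply kapAx; auto.
      clear. induction m as [|mm IHm]. simpl; ring. simpl fsum. rewrite IHm, S_INR. ring. }
    assert (0 <= fsum m (fun l => kap j l * Ax l)).
    { apply fsum_nonneg. intros l Hl. apply Rmult_le_pos. apply kap_nonneg; auto. apply Ax_nonneg; auto. }
    assert (0 <= INR m) by apply pos_INR.
    replace (fsum n lam * (x j * r j / fsum n lam)) with (x j * r j) by (field; lra).
    replace (fsum n lam / 2 * (x j * r j / fsum n lam * fsum m (fun l => kap j l * Ax l)))
      with (x j * r j * fsum m (fun l => kap j l * Ax l) / 2) by (field; lra).
    assert (x j * r j * fsum m (fun l => kap j l * Ax l) <= lam j * r j * (INR m * (2 / SS))).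
    { apply Rmult_le_compat; try nra. }
    assert (2 * r j / SS >= 0). { apply Rle_ge. apply Rle_mult_inv_pos; lra. }
    unfold Rdiv in *. nra.
  - destruct (goodb_false j m Eg) as [l [Hl [Hal Hcl]]].
    assert (a l j * x j <= Ax l).
    { apply (fsum_single n (fun j => a l j * x j)); auto. intros i Hi. apply Rmult_le_pos; [apply Ha|apply Hx]; auto. }
    pose proof (HAx l Hl).
    assert (x j * SS <= 2).
    { apply Rmult_le_reg_l with (a l j); auto.
      assert (a l j * x j * SS <= c0 l).
      { apply Rle_trans with (Ax l * SS). apply Rmult_le_compat_r; lra.
        apply Rmult_le_reg_r with (/ SS). apply Rinv_0_lt_compat; lra.
        rewrite Rmult_assoc, Rinv_r, Rmult_1_r by lra. unfold Rdiv in *; lra. }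
      lra. }
    assert (0 <= INR m) by apply pos_INR.
    assert (r j * x j <= (2 + INR m * lam j) * r j / SS).
    { apply Rmult_le_reg_r with SS. lra. replace ((2 + INR m * lam j) * r j / SS * SS) with ((2 + INR m * lam j) * r j) by (field; lra).
      assert (0 <= r j * (INR m * lam j)) by (apply Rmult_le_pos; [auto| apply Rmult_le_pos; lra]).
      assert (r j * (x j * SS) <= r j * 2) by (apply Rmult_le_compat_l; auto). nra. }
    unfold Rdiv in *. rewrite Rmult_0_r, Rmult_0_l. nra. Qed.


Definition rhoS := 1 - 1 / SS.

Lemma sq_bound (b0 : R) l k c' : (l < m)%nat -> reach k c0 c' ->
  (Rmax 0 ((SS - 1) * b0 - c' l)) ^ 2 <=
  rhoS ^ 2 * (Rmax 0 (SS * b0 - c0 l)) ^ 2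
  + 2 * rhoS * Rmax 0 (SS * b0 - c0 l) * (c0 l - c' l - Ax l)
  + (INR k * Acol l) ^ 2 + Ax l ^ 2.
Proof. intros Hl Hr'. destruct (Hr' l Hl) as [H1 [H2 H3]].
  set (u := Rmax 0 (SS * b0 - c0 l)).
  assert (Hu0 : 0 <= u) by apply Rmax_l. assert (Hu1 : SS * b0 - c0 l <= u) by apply Rmax_r.
  assert (Hrho : 0 <= rhoS <= 1). { unfold rhoS. split. 
     assert (1 / SS <= 1). { apply Rmult_le_reg_l with SS. lra. field_simplify; lra. } lra.
     assert (0 < 1 / SS) by (apply Rdiv_lt_0_compat; lra). lra. }
  pose proof (HAx l Hl). pose proof (Ax_nonneg l Hl).
  assert (HAxS : Ax l <= c0 l / SS) by auto.
  assert (E : (SS - 1) * b0 - c' l = rhoS * (SS * b0 - c0 l) - c0 l / SS + (c0 l - c' l)).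
  { unfold rhoS. field. lra. }
  set (Z := rhoS * u + (c0 l - c' l) - Ax l).
  assert (HZ : (SS - 1) * b0 - c' l <= Z).
  { rewrite E. unfold Z. assert (rhoS * (SS * b0 - c0 l) <= rhoS * u) by (apply Rmult_le_compat_l; lra). lra. }
  assert (Hsq : (Rmax 0 ((SS - 1) * b0 - c' l)) ^ 2 <= Z ^ 2).
  { unfold Rmax. destruct (Rle_dec 0 ((SS - 1) * b0 - c' l)). nra. simpl. nra. }
  eapply Rle_trans; [exact Hsq|].
  assert (0 <= INR k * Acol l) by lra.
  assert ((c0 l - c' l) ^ 2 <= (INR k * Acol l) ^ 2) by (apply pow_incr; lra).
  assert (0 <= (c0 l - c' l) * Ax l) by (apply Rmult_le_pos; lra).
  unfold Z. nra. Qed.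

Lemma sqrt_Sit (b0 bet : R) l k : (l < m)%nat -> 0 < bet ->
  Sit k (fun c' => sqrt ((Rmax 0 ((SS - 1) * b0 - c' l)) ^ 2 + bet * (SS - 1))) c0 <=
  sqrt ((Rmax 0 (SS * b0 - c0 l)) ^ 2 + bet * SS) +
  (rhoS ^ 2 * (Rmax 0 (SS * b0 - c0 l)) ^ 2
   + 2 * rhoS * Rmax 0 (SS * b0 - c0 l) * (INR k * Ax l / fsum n lam - Ax l)
   + (INR k * Acol l) ^ 2 + Ax l ^ 2 + bet * (SS - 1)
   - ((Rmax 0 (SS * b0 - c0 l)) ^ 2 + bet * SS)) / (2 * sqrt ((Rmax 0 (SS * b0 - c0 l)) ^ 2 + bet * SS)).
Proof. intros Hl Hb.
  set (u := Rmax 0 (SS * b0 - c0 l)).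
  set (q0 := u ^ 2 + bet * SS).
  assert (Hu0 : 0 <= u) by apply Rmax_l.
  assert (Hq0 : 0 < q0) by (unfold q0; nra).
  pose proof (sqrt_lt_R0 q0 Hq0) as Hsq.
  assert (Hrho : 0 <= rhoS). { unfold rhoS.
     assert (1 / SS <= 1). { apply Rmult_le_reg_l with SS. lra. field_simplify; lra. } lra. }
  set (gp := rhoS * u / sqrt q0).
  assert (Hgp : 0 <= gp) by (unfold gp; apply Rle_mult_inv_pos; [apply Rmult_le_pos|]; lra).
  set (al := sqrt q0 + (rhoS ^ 2 * u ^ 2 + 2 * rhoS * u * (c0 l - Ax l) + (INR k * Acol l) ^ 2 + Ax l ^ 2
              + bet * (SS - 1) - q0) / (2 * sqrt q0)).
  apply Rle_trans with (Sit k (fun c => al - gp * c l) c0).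
  { apply Sit_mono; auto. intros c' Hr'.
    eapply Rle_trans. apply (tangent _ q0); auto.
    apply Rplus_le_le_0_compat. apply pow2_ge_0. apply Rmult_le_pos; lra.
    pose proof (sq_bound b0 l k c' Hl Hr'). fold u in H.
    unfold al, gp.
    assert (E : sqrt q0 + (rhoS ^ 2 * u ^ 2 + 2 * rhoS * u * (c0 l - Ax l) + (INR k * Acol l) ^ 2 + Ax l ^ 2 + bet * (SS - 1) - q0) / (2 * sqrt q0) - rhoS * u / sqrt q0 * c' l
       = sqrt q0 + (rhoS ^ 2 * u ^ 2 + 2 * rhoS * u * (c0 l - c' l - Ax l) + (INR k * Acol l) ^ 2 + Ax l ^ 2 + bet * (SS - 1) - q0) / (2 * sqrt q0)).
    { field. lra. }
    rewrite E. apply Rplus_le_compat_l. unfold Rdiv. apply Rmult_le_compat_r.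
    apply Rlt_le, Rinv_0_lt_compat; lra. lra. }
  rewrite (Sit_ext _ (fun c => al - gp * c l) (fun c => -1 * (- al + gp * c l))) by (intros; ring).
  rewrite Sit_scal.
  pose proof (Sit_lin (fun c => gp * c l) (fun j => gp * a l j)) as HL.
  assert (HL' : forall i al c, al + gp * c l - INR i * fsum n (fun j => x j / fsum n lam * (gp * a l j))
                  <= Sit i (fun c => al + gp * c l) c).
  { apply HL. intros j c Hj. unfold consume. ring. intros j Hj. apply Rmult_le_pos; auto. }
  specialize (HL' k (- al) c0).
  assert (ED : fsum n (fun j => x j / fsum n lam * (gp * a l j)) = gp * Ax l / fsum n lam).
  { unfold Ax. rewrite (fsum_ext n _ (fun j => gp / fsum n lam * (a l j * x j))) by (intros; unfold Rdiv; ring).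
    rewrite fsum_scal. unfold Rdiv; ring. }
  rewrite ED in HL'.
  unfold al, gp in *. fold u. fold q0.
  assert (E2 : -1 * (- (sqrt q0 + (rhoS ^ 2 * u ^ 2 + 2 * rhoS * u * (c0 l - Ax l) + (INR k * Acol l) ^ 2 + Ax l ^ 2 + bet * (SS - 1) - q0) / (2 * sqrt q0)) + rhoS * u / sqrt q0 * c0 l - INR k * (rhoS * u / sqrt q0 * Ax l / fsum n lam))
     = sqrt q0 + (rhoS ^ 2 * u ^ 2 + 2 * rhoS * u * (INR k * Ax l / fsum n lam - Ax l) + (INR k * Acol l) ^ 2 + Ax l ^ 2 + bet * (SS - 1) - q0) / (2 * sqrt q0)).
  { pose proof Lam_pos. field. lra. }
  rewrite <- E2. lra. Qed.

End Period.

Definition Kc (n : nat) (r : nat -> R) (a : nat -> nat -> R) (l : nat) :=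
  fsum n (fun j => if Rlt_dec 0 (a l j) then r j / a l j else 0).

Lemma lp_lip n m lam r a b0 b xs x :
  (forall j, (j < n)%nat -> 0 <= r j) ->
  (forall l j, (l < m)%nat -> (j < n)%nat -> 0 <= a l j) ->
  lp_feas n m lam a b0 xs -> lp_opt n m lam r a b x -> (forall l, (l < m)%nat -> 0 <= b l) ->
  fsum n (fun j => r j * xs j) - fsum m (fun l => Kc n r a l * Rmax 0 (b0 l - b l)) <= fsum n (fun j => r j * x j).
Proof. intros Hr Ha [Hxs1 Hxs2] [_ Hopt] Hb.
  set (d := fun l => Rmax 0 (b0 l - b l)).
  set (sub := fun j => fsum m (fun l => if Rlt_dec 0 (a l j) then d l / a l j else 0)).
  assert (Hd : forall l, 0 <= d l) by (intros; apply Rmax_l).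
  assert (Hsubt : forall j l, (l < m)%nat -> 0 <= (if Rlt_dec 0 (a l j) then d l / a l j else 0)).
  { intros j l Hl. destruct Rlt_dec; [apply Rle_mult_inv_pos; auto| lra]. }
  assert (Hsub : forall j, 0 <= sub j) by (intros; apply fsum_nonneg; auto).
  set (y := fun j => Rmax 0 (xs j - sub j)).
  assert (Hy0 : forall j, 0 <= y j) by (intros; apply Rmax_l).
  assert (Hyx : forall j, (j < n)%nat -> y j <= xs j).
  { intros j Hj. unfold y. destruct (Hxs1 j Hj). specialize (Hsub j). apply Rmax_lub; lra. }
  assert (Hfeas : lp_feas n m lam a b y).
  { split.
    - intros j Hj. split; auto. destruct (Hxs1 j Hj). specialize (Hyx j Hj). lra.
    - intros l Hl.
      destruct (Classical_Prop.classic (exists j, (j < n)%nat /\ 0 < a l j /\ 0 < y j)) as [[j0 [Hj0 [Ha0 Hy0']]]|HN].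
      + assert (Eyj : y j0 = xs j0 - sub j0).
        { unfold y in *. unfold Rmax in *. destruct (Rle_dec 0 (xs j0 - sub j0)); lra. }
        assert (d l / a l j0 <= sub j0).
        { unfold sub. apply (fsum_single m (fun l => if Rlt_dec 0 (a l j0) then d l / a l j0 else 0) l) in Hl.
          destruct (Rlt_dec 0 (a l j0)); [exact Hl| lra]. auto. }
        assert (d l <= a l j0 * (xs j0 - y j0)).
        { rewrite Eyj. replace (xs j0 - (xs j0 - sub j0)) with (sub j0) by ring.
          apply Rmult_le_reg_l with (/ a l j0). apply Rinv_0_lt_compat; auto.
          rewrite <- Rmult_assoc, Rinv_l, Rmult_1_l by lra. unfold Rdiv in *. lra. }
        assert (a l j0 * (xs j0 - y j0) <= fsum n (fun j => a l j * (xs j - y j))).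
        { apply (fsum_single n (fun j => a l j * (xs j - y j))); auto.
          intros i Hi. apply Rmult_le_pos. apply Ha; auto. specialize (Hyx i Hi). lra. }
        assert (fsum n (fun j => a l j * y j) = fsum n (fun j => a l j * xs j) - fsum n (fun j => a l j * (xs j - y j))).
        { rewrite <- fsum_minus. apply fsum_ext. intros; ring. }
        specialize (Hxs2 l Hl). assert (b0 l - b l <= d l) by apply Rmax_r. lra.
      + apply Rle_trans with (fsum n (fun _ => 0)).
        apply fsum_le. intros j Hj. assert (0 <= a l j) by auto.
        destruct (Rlt_dec 0 (a l j)).
        * assert (y j <= 0). { apply Rnot_lt_le. intros Hc. apply HN. exists j. auto. }
          assert (Hyj : y j = 0) by (specialize (Hy0 j); lra). rewrite Hyj. lra.
        * assert (Haj : a l j = 0) by lra. rewrite Haj. lra.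
        * rewrite fsum_const0. auto. }
  specialize (Hopt y Hfeas).
  eapply Rle_trans; [| exact Hopt].
  apply Rle_trans with (fsum n (fun j => r j * (xs j - sub j))).
  - rewrite (fsum_ext n (fun j => r j * (xs j - sub j)) (fun j => r j * xs j - r j * sub j)) by (intros; ring).
    rewrite fsum_minus. apply Rplus_le_compat_l, Ropp_le_contravar. right.
    unfold sub. rewrite (fsum_ext n (fun j => r j * fsum m _) (fun j => fsum m (fun l => (if Rlt_dec 0 (a l j) then r j / a l j else 0) * d l))).
    2: { intros j Hj. rewrite <- fsum_scal. apply fsum_ext. intros l Hl. destruct Rlt_dec; [field; lra| ring]. }
    rewrite fsum_comm. apply fsum_ext. intros l Hl. unfold Kc. rewrite (Rmult_comm _ (d l)), <- fsum_scal.
    apply fsum_ext. intros; ring.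
  - apply fsum_le. intros j Hj. apply Rmult_le_compat_l; auto. apply Rmax_r. Qed.

Lemma perl_ineq (SS u K Vv W bet rho : R) :
  1 <= SS -> 0 <= u -> 0 <= K -> W <= Vv -> bet = Vv + 1 -> 0 <= Vv -> rho = 1 - 1 / SS ->
  (2 + bet) * K * (sqrt (u ^ 2 + bet * SS) +
     (rho ^ 2 * u ^ 2 + W + bet * (SS - 1) - (u ^ 2 + bet * SS)) / (2 * sqrt (u ^ 2 + bet * SS)))
  <= (2 + bet) * K * sqrt (u ^ 2 + bet * SS) - K * u / SS.
Proof. intros HS Hu HK HW Hb HV Hrho.
  set (q := u ^ 2 + bet * SS).
  assert (Hq : 0 < q) by (unfold q; nra).
  pose proof (sqrt_lt_R0 q Hq) as Hsq. pose proof (sqrt_sqrt q (Rlt_le _ _ Hq)) as Hsq2.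
  set (sq := sqrt q) in *.
  assert (HN : rho ^ 2 * u ^ 2 + W + bet * (SS - 1) - q <= - (u ^ 2 + SS) / SS).
  { unfold q. subst rho bet.
    assert (E : (1 - 1/SS) ^ 2 * u ^ 2 + W + (Vv + 1) * (SS - 1) - (u ^ 2 + (Vv + 1) * SS)
               = (1/(SS*SS) - 2/SS) * u ^ 2 + (W - Vv) - 1) by (field; lra).
    rewrite E.
    assert (1 / (SS * SS) <= 1 / SS).
    { apply Rmult_le_reg_l with (SS * SS). nra. field_simplify; nra. }
    assert (E2 : - (u ^ 2 + SS) / SS = - (1 / SS) * u ^ 2 - 1) by (field; lra).
    rewrite E2. assert (0 <= u ^ 2) by nra. nra. }
  assert (Hkey : 2 * u * sq <= (2 + bet) * (u ^ 2 + SS)).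
  { assert (2 * u * sq <= u ^ 2 + q) by (pose proof (pow2_ge_0 (u - sq)); nra).
    unfold q in *. nra. }
  assert (H2 : (2 + bet) * K * ((rho ^ 2 * u ^ 2 + W + bet * (SS - 1) - q) / (2 * sq)) <= - (K * u / SS)).
  { apply Rle_trans with ((2 + bet) * K * (- (u ^ 2 + SS) / SS / (2 * sq))).
    - apply Rmult_le_compat_l. nra. unfold Rdiv. apply Rmult_le_compat_r.
      apply Rlt_le, Rinv_0_lt_compat; lra. unfold Rdiv in HN. lra.
    - assert (E3 : (2 + bet) * K * (- (u ^ 2 + SS) / SS / (2 * sq)) = - (K * ((2 + bet) * (u ^ 2 + SS)) / (2 * sq * SS)))
        by (field; lra).
      rewrite E3. apply Ropp_le_contravar.
      apply Rmult_le_reg_r with (2 * sq * SS). nra.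
      replace (K * ((2 + bet) * (u ^ 2 + SS)) / (2 * sq * SS) * (2 * sq * SS)) with (K * ((2 + bet) * (u ^ 2 + SS))) by (field; lra).
      replace (K * u / SS * (2 * sq * SS)) with (K * (2 * u * sq)) by (field; lra).
      apply Rmult_le_compat_l; auto. }
  fold q. fold sq. lra. Qed.

Lemma sqrt_diff SS : 1 <= SS -> sqrt (SS - 1) <= sqrt SS - 1 / (2 * SS).
Proof. intros HS.
  pose proof (sqrt_sqrt SS ltac:(lra)) as H1. pose proof (sqrt_sqrt (SS - 1) ltac:(lra)) as H2.
  pose proof (sqrt_pos (SS - 1)). pose proof (sqrt_pos SS).
  set (p := sqrt SS) in *. set (q := sqrt (SS - 1)) in *.
  assert (Hp1 : 1 <= p). { unfold p. rewrite <- sqrt_1. apply sqrt_le_1_alt. lra. }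
  assert (Hqp : q <= p). { unfold p, q. apply sqrt_le_1_alt. lra. }
  assert (Hpp : p <= SS) by nra.
  assert (E : (p - q) * (p + q) = 1) by nra.
  assert (1 / (2 * SS) <= p - q).
  { apply Rmult_le_reg_l with (2 * SS). lra. field_simplify; try lra. nra. }
  lra. Qed.

Definition Vc n lam a l := (fsum n lam + fsum n lam * fsum n lam) * (Acol n a l) ^ 2 + (fsum n (fun j => a l j * lam j)) ^ 2.
Definition betc n lam a l := Vc n lam a l + 1.
Definition Mlc n lam r a l := (2 + betc n lam a l) * Kc n r a l.
Definition G2c n m lam r := 2 * gam n m lam r.
Definition Mfin n m lam r a := fsum m (fun l => Mlc n lam r a l * sqrt (betc n lam a l)) + G2c n m lam r.

Lemma pmf_nonneg mu k : 0 <= mu -> 0 <= poisson_pmf mu k.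
Proof. intros H. unfold poisson_pmf. apply Rle_mult_inv_pos.
  apply Rmult_le_pos. apply Rlt_le, exp_pos. apply pow_le; auto.
  apply INR_fact_lt_0. Qed.

Lemma series_lb (t Lk : nat -> R) l0 : ex_series t -> is_series Lk l0 -> (forall k, Lk k <= t k) -> l0 <= Series t.
Proof. intros Ht HL H. apply (is_series_le_R Lk t); auto. apply Series_correct; auto. Qed.

Lemma series_ub (t Lk : nat -> R) l0 : ex_series t -> is_series Lk l0 -> (forall k, t k <= Lk k) -> Series t <= l0.
Proof. intros Ht HL H. apply (is_series_le_R t Lk); auto. apply Series_correct; auto. Qed.

Lemma Sit_comb n m lam a x k A (M : nat -> R) (F : nat -> (nat -> R) -> R) c :
  Wsum n lam = 1 ->
  Sit n m lam a x k (fun c' => A + fsum m (fun l => M l * F l c')) c =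
  A + fsum m (fun l => M l * Sit n m lam a x k (F l) c).
Proof. intros HW.
  rewrite (Sit_plus n m lam a x k (fun _ => A) (fun c' => fsum m (fun l => M l * F l c'))).
  rewrite Sit_const by auto.
  rewrite (Sit_fsum n m lam a x k m (fun l c' => M l * F l c')). f_equal.
  apply fsum_ext; intros q _. apply (Sit_scal n m lam a x k (M q) (F q)). Qed.

Lemma Kc_nonneg n r a l : (forall j, (j < n)%nat -> 0 <= r j) -> 0 <= Kc n r a l.
Proof. intros Hr. unfold Kc. apply fsum_nonneg. intros j Hj. destruct Rlt_dec; [apply Rle_mult_inv_pos; auto| lra]. Qed.

Section Main.
Variables (n m : nat) (lam r : nat -> R) (a : nat -> nat -> R) (T : nat) (C : nat -> R)
  (sel : nat -> (nat -> R) -> (nat -> R)) (xstar : nat -> R).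
Hypothesis Hlam : forall j, (j < n)%nat -> 0 < lam j.
Hypothesis Hr : forall j, (j < n)%nat -> 0 <= r j.
Hypothesis Ha : forall l j, (l < m)%nat -> (j < n)%nat -> 0 <= a l j.
Hypothesis HT : (1 <= T)%nat.
Hypothesis Hsel : FR_selection n m lam r a T sel.

Definition V s c := FR_rem n m lam r a T sel s c.

Lemma V_S s c : V (S s) c = Series (fun k => poisson_pmf (fsum n lam) k *
   period_rev n m lam r a k (sel (T - S s)%nat c) (V s) c).
Proof. reflexivity. Qed.

Lemma sel_bounds s c : nonneg m c -> forall j, (j < n)%nat -> 0 <= sel (T - S s)%nat c j <= lam j.
Proof. intros Hc j Hj. assert (H := Hsel (T - S s)%nat c ltac:(lia) Hc). destruct H as [[H1 _] _]. auto. Qed.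

Lemma sel_opt s c : nonneg m c -> (S s <= T)%nat ->
  lp_opt n m lam r a (fun l => c l / INR (S s)) (sel (T - S s)%nat c).
Proof. intros Hc Hs. assert (H := Hsel (T - S s)%nat c ltac:(lia) Hc).
  replace (T - (T - S s))%nat with (S s) in H by lia. exact H. Qed.

Lemma Lm_nonneg : 0 <= fsum n lam.
Proof. apply fsum_nonneg. intros; apply Rlt_le; auto. Qed.

Lemma Rs_nonneg : 0 <= fsum n r.
Proof. apply fsum_nonneg. auto. Qed.

Lemma V_bounds s : forall c, nonneg m c -> 0 <= V s c <= INR s * (fsum n lam * fsum n r).
Proof. pose proof Lm_nonneg. pose proof Rs_nonneg. induction s; intros c Hc.
  - simpl. unfold V. simpl. lra.
  - rewrite V_S. set (x := sel (T - S s)%nat c).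
    assert (Hx : forall j, (j < n)%nat -> 0 <= x j <= lam j) by (apply sel_bounds; auto).
    set (B := INR s * (fsum n lam * fsum n r)).
    assert (HB : 0 <= B) by (unfold B; pose proof (pos_INR s); apply Rmult_le_pos; nra).
    assert (Hk : forall k, 0 <= period_rev n m lam r a k x (V s) c <= INR k * fsum n r + B).
    { intros k. apply pr_bounds; auto. }
    assert (Hex : ex_series (fun k => poisson_pmf (fsum n lam) k * period_rev n m lam r a k x (V s) c)).
    { apply (@ex_series_le R_AbsRing R_CompleteNormedModule _ (fun k => poisson_pmf (fsum n lam) k * (B + fsum n r * INR k + 0 * (INR k * (INR k - 1))))).
      - intros k. unfold norm; simpl. unfold abs; simpl. pose proof (pmf_nonneg _ k H). destruct (Hk k).
        rewrite Rabs_pos_eq by (apply Rmult_le_pos; auto). apply Rmult_le_compat_l; auto. lra.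
      - eexists. apply pmf_poly. }
    split.
    + apply Rle_trans with (0 + 0 * fsum n lam + 0 * (fsum n lam * fsum n lam)). right; ring.
      apply (series_lb _ (fun k => poisson_pmf (fsum n lam) k * (0 + 0 * INR k + 0 * (INR k * (INR k - 1))))); auto.
      apply pmf_poly. intros k. pose proof (pmf_nonneg _ k H). destruct (Hk k).
      apply Rmult_le_compat_l; auto. lra.
    + eapply Rle_trans. apply (series_ub _ _ _ Hex (pmf_poly (fsum n lam) B (fsum n r) 0)).
      intros k. pose proof (pmf_nonneg _ k H). destruct (Hk k).
      apply Rmult_le_compat_l; auto. lra. unfold B. rewrite S_INR. right; ring. Qed.


Lemma t_ex s c : nonneg m c ->
  ex_series (fun k => poisson_pmf (fsum n lam) k * period_rev n m lam r a k (sel (T - S s)%nat c) (V s) c).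
Proof. intros Hc. pose proof Lm_nonneg. pose proof Rs_nonneg.
  set (x := sel (T - S s)%nat c).
  assert (Hx : forall j, (j < n)%nat -> 0 <= x j <= lam j) by (apply sel_bounds; auto).
  set (B := INR s * (fsum n lam * fsum n r)).
  assert (HB : 0 <= B) by (unfold B; pose proof (pos_INR s); apply Rmult_le_pos; nra).
  assert (Hk : forall k, 0 <= period_rev n m lam r a k x (V s) c <= INR k * fsum n r + B).
  { intros k. apply pr_bounds; auto. intros; apply V_bounds; auto. }
  apply (@ex_series_le R_AbsRing R_CompleteNormedModule _ (fun k => poisson_pmf (fsum n lam) k * (B + fsum n r * INR k + 0 * (INR k * (INR k - 1))))).
  - intros k. unfold norm; simpl. unfold abs; simpl. pose proof (pmf_nonneg _ k H). destruct (Hk k).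
    rewrite Rabs_pos_eq by (apply Rmult_le_pos; auto). apply Rmult_le_compat_l; auto. lra.
  - eexists. apply pmf_poly. Qed.

Hypothesis Hn : (0 < n)%nat.
Hypothesis HC : nonneg m C.
Hypothesis Hxs : lp_opt n m lam r a (fun l => C l / INR T) xstar.

Definition b0 l := C l / INR T.
Definition Rstar := fsum n (fun j => r j * xstar j).
Definition Gpot s c := G2c n m lam r * sqrt (INR s) +
  fsum m (fun l => Mlc n lam r a l * sqrt ((Rmax 0 (INR s * b0 l - c l)) ^ 2 + betc n lam a l * INR s)).

Lemma Mlc_nonneg l : 0 <= Mlc n lam r a l.
Proof. unfold Mlc, betc, Vc. apply Rmult_le_pos; [| apply Kc_nonneg; auto].
  pose proof Lm_nonneg. assert (0 <= (fsum n lam + fsum n lam * fsum n lam) * Acol n a l ^ 2).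
  { apply Rmult_le_pos. nra. apply pow2_ge_0. }
  pose proof (pow2_ge_0 (fsum n (fun j => a l j * lam j))). lra. Qed.

Lemma gam_nonneg : 0 <= gam n m lam r.
Proof. unfold gam. apply fsum_nonneg. intros j Hj. apply Rmult_le_pos; auto.
  pose proof (pos_INR m). assert (0 < lam j) by auto. nra. Qed.

Lemma Rmax_div y SS : 0 < SS -> Rmax 0 (y / SS) = Rmax 0 y / SS.
Proof. intros H. unfold Rmax. destruct (Rle_dec 0 (y / SS)), (Rle_dec 0 y); try lra.
  - exfalso. apply n0. apply Rmult_le_reg_r with (/ SS). apply Rinv_0_lt_compat; lra. unfold Rdiv in r0. lra.
  - exfalso. apply n0. apply Rle_mult_inv_pos; lra. Qed.

Lemma main_ind s : (s <= T)%nat -> forall c, nonneg m c -> INR s * Rstar - Gpot s c <= V s c.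
Proof.
  induction s as [|s IH]; intros Hs c Hc.
  - unfold V. simpl FR_rem. unfold Gpot. simpl INR.
    assert (0 <= fsum m (fun l => Mlc n lam r a l * sqrt (Rmax 0 (0 * b0 l - c l) ^ 2 + betc n lam a l * 0))).
    { apply fsum_nonneg. intros l Hl. apply Rmult_le_pos. apply Mlc_nonneg. apply sqrt_pos. }
    pose proof gam_nonneg. pose proof (sqrt_pos 0). unfold G2c. nra.
  - rewrite V_S. set (x := sel (T - S s)%nat c).
    assert (Hx : forall j, (j < n)%nat -> 0 <= x j <= lam j) by (apply sel_bounds; auto).
    assert (Hopt : lp_opt n m lam r a (fun l => c l / INR (S s)) x) by (apply sel_opt; auto).
    set (SS := INR (S s)).
    assert (HSS : 1 <= SS). { unfold SS. rewrite S_INR. pose proof (pos_INR s). lra. }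
    assert (HAx : forall l, (l < m)%nat -> Ax n a x l <= c l / SS).
    { intros l Hl. destruct Hopt as [[_ H2] _]. apply H2; auto. }
    assert (HW : Wsum n lam = 1) by (apply Wsum_1; auto).
    pose proof (Lam_pos n lam Hlam Hn) as HLm.
    set (Lm := fsum n lam).
    assert (HLm' : 0 < Lm) by exact HLm.
    set (Ml := fun l => Mlc n lam r a l).
    set (bet := fun l => betc n lam a l).
    assert (Hbet : forall l, 0 < bet l).
    { intros l. unfold bet, betc, Vc. pose proof Lm_nonneg.
      assert (0 <= (fsum n lam + fsum n lam * fsum n lam) * Acol n a l ^ 2) by (apply Rmult_le_pos; [nra| apply pow2_ge_0]).
      pose proof (pow2_ge_0 (fsum n (fun j => a l j * lam j))). lra. }
    set (u := fun l => Rmax 0 (SS * b0 l - c l)).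
    set (q := fun l => u l ^ 2 + bet l * SS).
    assert (Hq : forall l, 0 < q l). { intros l. unfold q. assert (0 <= u l) by apply Rmax_l. specialize (Hbet l). nra. }
    set (sq := fun l => sqrt (q l)).
    assert (Hsq : forall l, 0 < sq l) by (intros; apply sqrt_lt_R0; auto).
    set (Axl := fun l => Ax n a x l).
    set (Acl := fun l => Acol n a l).
    set (rh := rhoS SS).
    set (z0 := fun l => Ml l * (sq l + (rh ^ 2 * u l ^ 2 - 2 * rh * u l * Axl l + Axl l ^ 2 + bet l * (SS - 1) - q l) / (2 * sq l))).
    set (z1 := fun l => Ml l * ((2 * rh * u l * Axl l / Lm + Acl l ^ 2) / (2 * sq l))).
    set (z2 := fun l => Ml l * (Acl l ^ 2 / (2 * sq l))).
    set (Phi0 := fsum n (gg n m lam r a x c)).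
    set (D := Dd n m lam r a x c).
    set (G2 := G2c n m lam r).
    set (c0' := INR s * Rstar - G2 * sqrt (INR s) - fsum m z0).
    set (c1' := Phi0 - fsum m z1).
    set (c2' := - D / 2 - fsum m z2).
    assert (Hk : forall k, c0' + c1' * INR k + c2' * (INR k * (INR k - 1)) <= period_rev n m lam r a k x (V s) c).
    { intros k. rewrite pr_decomp.
      pose proof (rev_lb n m lam r a x Hlam Hx Ha Hr Hn c Hc k) as R1. fold Phi0 D in R1.
      assert (R2 : INR s * Rstar - G2 * sqrt (INR s) +
                   fsum m (fun l => - Ml l * (sq l + (rh ^ 2 * u l ^ 2 + 2 * rh * u l * (INR k * Axl l / Lm - Axl l)
                      + (INR k * Acl l) ^ 2 + Axl l ^ 2 + bet l * (SS - 1) - q l) / (2 * sq l))) <= Sit n m lam a x k (V s) c).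
      { apply Rle_trans with (Sit n m lam a x k (fun c' => (INR s * Rstar - G2 * sqrt (INR s)) +
             fsum m (fun l => - Ml l * sqrt ((Rmax 0 ((SS - 1) * b0 l - c' l)) ^ 2 + bet l * (SS - 1)))) c).
        - rewrite Sit_comb by auto. apply Rplus_le_compat_l. apply fsum_le. intros l Hl.
          cbv beta. assert (Hm : 0 <= Ml l) by apply Mlc_nonneg.
          pose proof (sqrt_Sit n m lam a x Hlam Hx Ha Hn c SS Hc HSS HAx (b0 l) (bet l) l k Hl (Hbet l)) as Hs'.
          apply (Rmult_le_compat_l (Ml l)) in Hs'; auto. fold rh in Hs'. fold (u l) (q l) (sq l) (Axl l) (Acl l) Lm in Hs'. lra.
        - apply Sit_mono; auto. intros c' Hr'.
          assert (Hc' : nonneg m c') by (intros l Hl; apply (Hr' l Hl)).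
          eapply Rle_trans; [| apply IH; auto; lia].
          unfold Gpot. right. replace (SS - 1) with (INR s) by (unfold SS; rewrite S_INR; ring).
          rewrite (fsum_ext m (fun l => - Ml l * _) (fun l => -1 * (Mlc n lam r a l * sqrt (Rmax 0 (INR s * b0 l - c' l) ^ 2 + betc n lam a l * INR s)))) by (intros; unfold Ml, bet; ring).
          rewrite fsum_scal. fold G2. ring. }
      assert (E : fsum m (fun l => - Ml l * (sq l + (rh ^ 2 * u l ^ 2 + 2 * rh * u l * (INR k * Axl l / Lm - Axl l)
                      + (INR k * Acl l) ^ 2 + Axl l ^ 2 + bet l * (SS - 1) - q l) / (2 * sq l)))
                  = - (fsum m z0 + INR k * fsum m z1 + INR k * (INR k - 1) * fsum m z2)).
      { transitivity (fsum m (fun l => -1 * (z0 l + INR k * z1 l + INR k * (INR k - 1) * z2 l))).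
        apply fsum_ext. intros l Hl. unfold z0, z1, z2. specialize (Hsq l). field. split; lra.
        rewrite fsum_scal, !fsum_plus, !fsum_scal. ring. }
      rewrite E in R2. unfold c0', c1', c2'. nra. }
    assert (Hser := series_lb _ _ _ (t_ex s c Hc) (pmf_poly Lm c0' c1' c2')).
    eapply Rle_trans; [| apply Hser; intros k; apply Rmult_le_compat_l; [apply pmf_nonneg; lra| apply Hk]].
    pose proof (rev_final n m lam r a x Hlam Hx Ha Hr Hn c SS HSS HAx) as RF. fold Phi0 D Lm in RF.
    assert (Hcb : forall l, (l < m)%nat -> 0 <= c l / INR (S s)).
    { intros l Hl. apply Rle_mult_inv_pos. apply Hc; auto. fold SS; lra. }
    pose proof (lp_lip n m lam r a b0 (fun l => c l / INR (S s)) xstar x Hr Ha (proj1 Hxs) Hopt Hcb) as LP.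
    cbv beta in LP. fold Rstar SS in LP.
    assert (EK : fsum m (fun l => Kc n r a l * Rmax 0 (b0 l - c l / SS)) = fsum m (fun l => Kc n r a l * u l / SS)).
    { apply fsum_ext. intros l Hl. unfold u. replace (b0 l - c l / SS) with ((SS * b0 l - c l) / SS) by (field; lra).
      rewrite Rmax_div by lra. unfold Rdiv; ring. }
    rewrite EK in LP.
    assert (PL : forall l, (l < m)%nat -> z0 l + z1 l * Lm + z2 l * (Lm * Lm) <= Ml l * sq l - Kc n r a l * u l / SS).
    { intros l Hl.
      assert (E1 : z0 l + z1 l * Lm + z2 l * (Lm * Lm) = (2 + bet l) * Kc n r a l * (sqrt (u l ^ 2 + bet l * SS) +
           (rh ^ 2 * u l ^ 2 + ((Lm + Lm * Lm) * Acl l ^ 2 + Axl l ^ 2) + bet l * (SS - 1) - (u l ^ 2 + bet l * SS)) / (2 * sqrt (u l ^ 2 + bet l * SS)))).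
      { unfold z0, z1, z2, Ml, Mlc. fold (bet l). unfold sq, q. specialize (Hsq l). unfold sq, q in Hsq. field. lra. }
      rewrite E1. unfold Ml, Mlc, sq, q. fold (bet l).
      apply perl_ineq with (Vv := Vc n lam a l); auto.
      + apply Rmax_l.
      + apply Kc_nonneg; auto.
      + unfold Vc. fold Lm. fold (Acl l). apply Rplus_le_compat_l.
        assert (0 <= Axl l) by (unfold Axl, Ax; apply fsum_nonneg; intros j Hj; apply Rmult_le_pos; [apply Ha|apply Hx]; auto).
        assert (Axl l <= fsum n (fun j => a l j * lam j)).
        { apply fsum_le. intros j Hj. apply Rmult_le_compat_l; [apply Ha; auto| apply Hx; auto]. }
        apply pow_incr; lra.
      + unfold Vc. pose proof Lm_nonneg. assert (0 <= (fsum n lam + fsum n lam * fsum n lam) * Acol n a l ^ 2) by (apply Rmult_le_pos; [nra| apply pow2_ge_0]).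
        pose proof (pow2_ge_0 (fsum n (fun j => a l j * lam j))). lra. }
    assert (PLs : fsum m z0 + fsum m z1 * Lm + fsum m z2 * (Lm * Lm) <= fsum m (fun l => Ml l * sq l) - fsum m (fun l => Kc n r a l * u l / SS)).
    { rewrite <- fsum_minus. rewrite !(Rmult_comm (fsum m _)), <- !fsum_scal, <- !fsum_plus. apply fsum_le. intros l Hl.
      specialize (PL l Hl). lra. }
    assert (SQ : G2 * sqrt (INR s) <= G2 * sqrt SS - gam n m lam r / SS).
    { replace (INR s) with (SS - 1) by (unfold SS; rewrite S_INR; ring). pose proof (sqrt_diff SS HSS). pose proof gam_nonneg.
      unfold G2, G2c. replace (2 * gam n m lam r * sqrt SS - gam n m lam r / SS) with (2 * gam n m lam r * (sqrt SS - 1 / (2 * SS))) by (field; lra).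
      apply Rmult_le_compat_l; lra. }
    unfold Gpot. fold SS G2.
    replace (fsum m (fun l => Mlc n lam r a l * sqrt (Rmax 0 (SS * b0 l - c l) ^ 2 + betc n lam a l * SS))) with (fsum m (fun l => Ml l * sq l)) by reflexivity.
    unfold c0', c1', c2'. replace SS with (INR s + 1) at 1 by (unfold SS; rewrite S_INR; ring).
    nra. Qed.

End Main.

Theorem proposition3 :
  forall (n m : nat) (lam r : nat -> R) (a : nat -> nat -> R),
    (forall j, (j < n)%nat -> 0 < lam j) ->
    (forall j, (j < n)%nat -> 0 <= r j) ->
    (forall l j, (l < m)%nat -> (j < n)%nat -> 0 <= a l j) ->
    exists (M : R) (T1 : nat),
      forall (T : nat) (C : nat -> R) (sel : nat -> (nat -> R) -> (nat -> R))
             (xstar : nat -> R),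
        (1 <= T)%nat -> (T1 <= T)%nat ->
        (forall l, (l < m)%nat -> 0 <= C l) ->
        FR_selection n m lam r a T sel ->
        lp_opt n m lam r a (fun l => C l / INR T) xstar ->
        INR T * fsum n (fun j => r j * xstar j) - v_FR n m lam r a T sel C
          <= M * sqrt (INR T).
Proof.
  intros n m lam r a Hlam Hr Ha.
  exists (Mfin n m lam r a), 1%nat.
  intros T C sel xstar HT _ HC Hsel Hxs.
  assert (HM : 0 <= Mfin n m lam r a).
  { unfold Mfin. apply Rplus_le_le_0_compat.
    - apply fsum_nonneg. intros l Hl. apply Rmult_le_pos. eapply Mlc_nonneg; eauto. apply sqrt_pos.
    - unfold G2c. pose proof (gam_nonneg n m lam r Hlam Hr). lra. }
  assert (HTp : 0 < INR T) by (apply lt_0_INR; lia).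
  pose proof (sqrt_pos (INR T)).
  destruct (Nat.eq_dec n 0) as [En|Hn].
  - subst n. simpl fsum.
    pose proof (V_bounds 0 m lam r a T sel Hlam Hr Ha HT Hsel T C HC) as [HV _].
    unfold v_FR. unfold V in HV. assert (0 <= Mfin 0 m lam r a * sqrt (INR T)) by (apply Rmult_le_pos; auto).
    lra.
  - pose proof (main_ind n m lam r a T C sel xstar Hlam Hr Ha HT Hsel ltac:(lia) Hxs T (Nat.le_refl T) C HC) as HI.
    unfold V, Rstar in HI. unfold v_FR.
    assert (EG : Gpot n m lam r a T C T C = Mfin n m lam r a * sqrt (INR T)).
    { unfold Gpot, Mfin. rewrite Rmult_plus_distr_r, Rplus_comm. f_equal.
      rewrite Rmult_comm, <- fsum_scal. apply fsum_ext. intros l Hl.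
      unfold b0. replace (INR T * (C l / INR T) - C l) with 0 by (field; lra).
      rewrite Rmax_left by lra.
      replace (0 ^ 2 + betc n lam a l * INR T) with (betc n lam a l * INR T) by ring.
      rewrite sqrt_mult_alt. ring.
      unfold betc, Vc. pose proof (fsum_nonneg n lam ltac:(intros; apply Rlt_le; auto)).
      assert (0 <= (fsum n lam + fsum n lam * fsum n lam) * Acol n a l ^ 2) by (apply Rmult_le_pos; [nra| apply pow2_ge_0]).
      pose proof (pow2_ge_0 (fsum n (fun j => a l j * lam j))). lra. }
    rewrite EG in HI. lra.
Qed.
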